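(* Let $n$ be a positive integer and let $a,b$ be integers with $0\le a,b\le n$. Then there exists an orientation of the $n$-cube $Q_n$ in which every vertex has in-degree equal to $a$ or to $b$ if and only if there exist non-negative integers $s$ and $t$ such that $s+t=2^n$ and $as+bt=n2^{n-1}$.
   Context: The $n$-cube $Q_n$ is the graph whose vertices are the binary $n$-tuples, two vertices being adjacent iff they differ in exactly one coordinate. An orientation assigns to each edge a head and a tail; the in-degree of a vertex is the number of edges whose head is that vertex. *)

(* Defs.v *)
From mathcomp Require Import all_boot.
Set Implicit Arguments. Unset Strict Implicit. Unset Printing Implicit Defensive.

Definition cube_vertex (n : nat) := {ffun 'I_n -> bool}.

Definition cube_adj (n : nat) (x y : cube_vertex n) : bool :=
  #|[set i : 'I_n | x i != y i]| == 1.

(* An orientation of Q_n: a relation [o x y] meaning "the edge xy is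
   oriented from tail x to head y"; for each edge exactly one direction
   is chosen.  (Values of o on non-edges are irrelevant.) *)
Definition is_orientation (n : nat) (o : cube_vertex n -> cube_vertex n -> bool) : Prop :=
  forall x y : cube_vertex n, cube_adj x y -> o x y = ~~ o y x.

Definition indeg (n : nat) (o : cube_vertex n -> cube_vertex n -> bool) (y : cube_vertex n) : nat :=
  #|[set x : cube_vertex n | cube_adj x y && o x y]|.

(* Main.v *)
From HB Require Import structures.
From Stdlib Require Import PeanoNat Lia.
Require Import Defs.
From mathcomp Require Import all_boot.
Set Implicit Arguments. Unset Strict Implicit. Unset Printing Implicit Defensive.


Section Cube.
Variable n : nat.
Local Notation V := (cube_vertex n).

Definition flip (y : V) (i : 'I_n) : V := [ffun j => if j == i then ~~ y j else y j].

Lemma flipE y i j : flip y i j = if j == i then ~~ y j else y j.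
Proof. by rewrite ffunE. Qed.

Lemma flipK y i : flip (flip y i) i = y.
Proof. apply/ffunP=> j; rewrite !flipE; case: eqP => // ->; exact: negbK. Qed.

Lemma flip_inj y : injective (flip y).
Proof.
move=> i k /ffunP /(_ i); rewrite !flipE eqxx; case: eqP => // _.
by case: (y i).
Qed.

Lemma diff_flip y i : [set j | flip y i j != y j] = [set i].
Proof.
apply/setP=> j; rewrite !inE flipE; case: (j =P i) => _; by case: (y j).
Qed.

Lemma adj_flip y i : cube_adj (flip y i) y.
Proof. by rewrite /cube_adj diff_flip cards1. Qed.

Lemma adjP (x y : V) : cube_adj x y -> exists i, x = flip y i.
Proof.
rewrite /cube_adj => /cards1P [i hi]; exists i; apply/ffunP=> j.
rewrite flipE; move/setP: hi => /(_ j); rewrite !inE.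
case: (j =P i) => [->|_]; first by case: (x i) (y i) => [] [].
by move/negbFE/eqP.
Qed.

Lemma adj_sym (x y : V) : cube_adj x y = cube_adj y x.
Proof.
rewrite /cube_adj; congr (_ == _); apply: eq_card => j; rewrite !inE; by rewrite eq_sym.
Qed.

Lemma nbrs (y : V) : [set x | cube_adj x y] = [set flip y i | i : 'I_n].
Proof.
apply/setP=> x; rewrite inE; apply/idP/imsetP.
  by case/adjP=> i ->; exists i.
by case=> i _ ->; exact: adj_flip.
Qed.

Lemma card_nbrs (y : V) : #|[set x | cube_adj x y]| = n.
Proof. by rewrite nbrs card_imset ?card_ord //; exact: flip_inj. Qed.

Variable hd : V -> 'I_n -> bool.
Hypothesis hdK : forall y i, hd (flip y i) i = ~~ hd y i.

Definition orient (x y : V) : bool := [exists i, (x i != y i) && hd y i].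

Lemma orient_flip y i : orient (flip y i) y = hd y i.
Proof.
rewrite /orient; apply/existsP/idP.
  case=> j /andP [hj hh]; suff -> : i = j by [].
  by move: hj; rewrite flipE; case: (j =P i) => [->|_] //; rewrite eqxx.
by move=> h; exists i; rewrite h flipE eqxx andbT; case: (y i).
Qed.

Lemma orient_ok : is_orientation orient.
Proof.
move=> x y /adjP [i ->]; rewrite orient_flip.
have -> : orient y (flip y i) = orient (flip (flip y i) i) (flip y i) by rewrite flipK.
by rewrite orient_flip hdK negbK.
Qed.

Lemma indeg_orient (y : V) : indeg orient y = #|[set i | hd y i]|.
Proof.
rewrite /indeg.
have -> : [set x | cube_adj x y && orient x y] = [set flip y i | i in [set i | hd y i]].
  apply/setP=> x; rewrite inE; apply/andP/imsetP.
    case=> /adjP [i ->]; rewrite orient_flip => h; exists i => //; by rewrite inE.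
  by case=> i; rewrite inE => h ->; rewrite adj_flip orient_flip.
by rewrite card_imset //; exact: flip_inj.
Qed.

End Cube.


Lemma card_set_sum (T : finType) (P : pred T) : #|[set x | P x]| = \sum_x (P x : nat).
Proof. by rewrite -sum1dep_card big_mkcond /=; apply: eq_bigr => x _; case: (P x). Qed.

Lemma card_V n : #|{: cube_vertex n}| = 2 ^ n.
Proof. by rewrite card_ffun card_bool card_ord. Qed.

Lemma handshake n (o : cube_vertex n -> cube_vertex n -> bool) :
  is_orientation o -> \sum_(y : cube_vertex n) indeg o y = n * 2 ^ n %/ 2.
Proof.
move=> ho.
set T1 := \sum_y indeg o y.
have e1 : T1 = \sum_(y : cube_vertex n) \sum_(x : cube_vertex n) ((cube_adj x y && o x y) : nat).
  by apply: eq_bigr => y _; rewrite /indeg card_set_sum.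
have e2 : T1 = \sum_(y : cube_vertex n) \sum_(x : cube_vertex n) ((cube_adj x y && o y x) : nat).
  rewrite e1 exchange_big /=; apply: eq_bigr => y _; apply: eq_bigr => x _.
  by rewrite adj_sym.
have e3 : T1 + T1 = n * 2 ^ n.
  rewrite {1}e1 e2 -big_split /= -card_V mulnC -sum_nat_const; apply: eq_bigr => y _.
  rewrite -big_split /=; transitivity #|[set x | cube_adj x y]|; last exact: card_nbrs.
  rewrite card_set_sum; apply: eq_bigr => x _.
  case h: (cube_adj x y) => //=; rewrite (ho x y h); by case: (o y x).
by rewrite -e3 addnn -muln2 mulnK.
Qed.

Lemma forward n a b (hn : 0 < n) (o : cube_vertex n -> cube_vertex n -> bool) :
  is_orientation o -> (forall v, indeg o v = a \/ indeg o v = b) ->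
  exists s t : nat, s + t = 2 ^ n /\ a * s + b * t = n * 2 ^ n.-1.
Proof.
move=> ho hv.
exists #|[set v | indeg o v == a]|, #|[set v | indeg o v != a]|; split.
  rewrite !card_set_sum -big_split /= -card_V -sum1_card; apply: eq_bigr => v _.
  by case: (indeg o v == a).
have -> : n * 2 ^ n.-1 = n * 2 ^ n %/ 2 by case: (n) hn => // m _; rewrite expnS mulnCA mulKn.
rewrite -(handshake ho) !card_set_sum !big_distrr -big_split /=.
apply: eq_bigr => v _; case: eqP => [->|h] /=; first by rewrite muln1 muln0 addn0.
by case: (hv v) => // ->; rewrite muln0 muln1.
Qed.


Lemma lxorA : associative Nat.lxor. Proof. move=> x y z; by rewrite Nat.lxor_assoc. Qed.
Lemma lxorC : commutative Nat.lxor. Proof. move=> x y; exact: Nat.lxor_comm. Qed.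
Lemma lxor0n : left_id 0 Nat.lxor. Proof. move=> x; exact: Nat.lxor_0_l. Qed.
HB.instance Definition _ := Monoid.isComLaw.Build nat 0 Nat.lxor lxorA lxorC lxor0n.

Lemma powE x j : Nat.pow x j = x ^ j.
Proof. elim: j => // j IH; by rewrite expnS /= IH. Qed.

Lemma lxor_lt j x y : x < 2 ^ j -> y < 2 ^ j -> Nat.lxor x y < 2 ^ j.
Proof.
rewrite -!powE => /ltP hx /ltP hy; apply/ltP.
have h0 : forall z, (z < Nat.pow 2 j)%coq_nat -> Nat.shiftr z j = 0.
  by move=> z hz; rewrite Nat.shiftr_div_pow2; apply: Nat.div_small.
have hp : Nat.pow 2 j <> 0 by apply: Nat.pow_nonzero.
have := Nat.shiftr_lxor x y j; rewrite (h0 x hx) (h0 y hy) Nat.shiftr_div_pow2 => h.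
by apply/(Nat.div_small_iff _ _ hp).
Qed.

Lemma lxorK x y : Nat.lxor x (Nat.lxor x y) = y.
Proof. by rewrite lxorA Nat.lxor_nilpotent lxor0n. Qed.

Lemma xor_count j X c : X < 2 ^ j -> c <= 2 ^ j ->
  \sum_(0 <= k < 2 ^ j) (Nat.lxor X k < c) = c.
Proof.
move=> hX hc.
have hh : forall k : 'I_(2 ^ j), Nat.lxor X k < 2 ^ j by move=> k; apply: lxor_lt.
pose h (k : 'I_(2 ^ j)) := Ordinal (hh k).
have hinj : injective h.
  move=> k1 k2 /(congr1 val) /= e; apply: val_inj => /=.
  by rewrite -(lxorK X k1) e lxorK.
rewrite big_mkord (reindex_inj hinj) /=.
have -> : \sum_(i < 2 ^ j) (Nat.lxor X (Nat.lxor X i) < c) = \sum_(i < 2 ^ j) (i < c).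
  by apply: eq_bigr => i _; rewrite lxorK.
rewrite -(big_mkord xpredT (fun k => (k < c) : nat)) (big_cat_nat (leq0n c) hc) /=.
rewrite big_nat_cond (eq_bigr (fun _ => 1)); last by move=> i /andP [/andP [_ ->]].
rewrite -big_nat_cond sum_nat_const_nat subn0 muln1.
rewrite big_nat_cond big1 ?addn0 //; move=> i /andP [/andP [h1 _] _]; by rewrite ltnNge h1.
Qed.


Lemma block_sum (F : nat -> nat) B r : 0 < B ->
  \sum_(0 <= k < r * B) F (k %% B) = r * \sum_(0 <= k < B) F k.
Proof.
move=> hB; elim: r => [|r IH]; first by rewrite mul0n big_geq.
rewrite mulSn addnC (big_cat_nat (leq0n _) (leq_addr B _)) /= IH.
have := big_addn 0 (r * B + B) (r * B) xpredT (fun i => F (i %% B)).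
move/(_ 0 addn); rewrite add0n addKn => ->.
rewrite mulSn [in RHS]addnC; congr (_ + _).
apply: eq_big_nat => k /andP [_ hk].
by rewrite addnC modnMDl modn_small.
Qed.

Section Cons.
Variables (n a d j cc r : nat).
Local Notation B := (2 ^ j).
Local Notation V := (cube_vertex n).

Definition bit (y : V) (k : nat) : bool := if insub k is Some i then y i else false.

Lemma bit_val (y : V) (i : 'I_n) : bit y i = y i.
Proof. by rewrite /bit valK. Qed.

Lemma bit_flip (y : V) i k : bit (flip y i) k = if k == val i then ~~ bit y k else bit y k.
Proof.
rewrite /bit; case: insubP => [u _ <-|hk]; first by rewrite flipE.
by case: eqP => // e; move: hk; rewrite e ltn_ord.
Qed.

Definition Par (y : V) : bool := odd (\sum_(i < n | 2 * a <= i) y i).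
Definition key (i : 'I_n) : nat := (i - 2 * a) %% B.
Definition main (i : 'I_n) : bool := (2 * a <= i) && (i < 2 * a + d).
Definition X (y : V) : nat := \big[Nat.lxor/0]_(i < n | main i && y i) key i.
Definition Src (y : V) : bool := ~~ Par y && (X y < cc).
Definition hd (y : V) (i : 'I_n) : bool :=
  if i < 2 * a then (bit y (i./2).*2 == bit y ((i./2).*2).+1) (+) odd i
  else if i < 2 * a + d then (if Par y then Src (flip y i) else ~~ Src y)
  else Par y.

Lemma Par_flip (y : V) i : Par (flip y i) = if 2 * a <= i then ~~ Par y else Par y.
Proof.
rewrite /Par; case: ifP => h.
  rewrite (bigD1 i h) [in RHS](bigD1 i h) /= flipE eqxx.
  have -> : \sum_(k < n | (2 * a <= k) && (k != i)) flip y i k =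
            \sum_(k < n | (2 * a <= k) && (k != i)) y k.
    by apply: eq_bigr => k /andP [_ /negbTE hk]; rewrite flipE hk.
  by rewrite !oddD; case: (y i); rewrite /= ?negbK.
congr (odd _); apply: eq_bigr => k hk; rewrite flipE; case: (k =P i) => // e; by move: hk; rewrite e h.
Qed.

Lemma X_lt (y : V) : X y < B.
Proof.
rewrite /X; apply: (big_ind (fun v => v < B)); first by rewrite expn_gt0.
  by move=> x1 x2; apply: lxor_lt.
by move=> i _; rewrite /key ltn_pmod // expn_gt0.
Qed.

Lemma big_lxorD1 (P : pred 'I_n) (F : 'I_n -> nat) i :
  \big[Nat.lxor/0]_(k | P k) F k =
  Nat.lxor (\big[Nat.lxor/0]_(k | P k && (k != i)) F k) (if P i then F i else 0).
Proof.
case: ifP => hP; first by rewrite (bigD1 i hP) lxorC.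
rewrite Nat.lxor_0_r; apply: eq_bigl => k; case: (k =P i) => [->|_]; by rewrite ?hP ?andbT.
Qed.

Lemma X_flip (y : V) i : X (flip y i) = if main i then Nat.lxor (X y) (key i) else X y.
Proof.
rewrite /X; case: ifP => hm; last first.
  apply: eq_bigl => k; rewrite flipE; case: (k =P i) => [->|//]; by rewrite hm.
have e : \big[Nat.lxor/0]_(k < n | (main k && flip y i k) && (k != i)) key k =
         \big[Nat.lxor/0]_(k < n | (main k && y k) && (k != i)) key k.
  apply: eq_bigl => k; rewrite flipE; case: (k =P i) => [->|]; by rewrite ?andbF.
rewrite (big_lxorD1 _ _ i) [in RHS](big_lxorD1 _ _ i) e hm flipE eqxx /=.
set S := \big[Nat.lxor/0]_(k < n | (main k && y k) && (k != i)) key k.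
case: (y i) => /=; last by rewrite Nat.lxor_0_r.
by rewrite Nat.lxor_0_r -lxorA Nat.lxor_nilpotent Nat.lxor_0_r.
Qed.
Lemma pairK (o u v : bool) (p k : nat) : k = o + p.*2 ->
  ((if p.*2 == k then ~~ u else u) == (if p.*2.+1 == k then ~~ v else v)) (+) o
  = ~~ ((u == v) (+) o).
Proof.
move=> ->; case: o; rewrite ?add0n ?add1n ?eqxx ?(ltn_eqF (ltnSn _)) ?(gtn_eqF (ltnSn _));
  by case: u; case: v.
Qed.

Lemma hdK (y : V) i : hd (flip y i) i = ~~ hd y i.
Proof.
rewrite /hd; case: ifP => h1.
  by rewrite !bit_flip pairK // odd_double_half.
have h2 : 2 * a <= i by rewrite leqNgt h1.
rewrite Par_flip h2; case: ifP => h3 //.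
by rewrite flipK; case: (Par y); rewrite /= ?negbK.
Qed.
Definition hdN (y : V) (k : nat) : bool := if insub k is Some i then hd y i else false.

Lemma hdN_lt (y : V) k (hk : k < n) : hdN y k = hd y (Ordinal hk).
Proof. by rewrite /hdN insubT. Qed.

Lemma count_hd (y : V) : #|[set i | hd y i]| = \sum_(0 <= k < n) hdN y k.
Proof.
rewrite -sum1dep_card big_mkcond big_mkord /=; apply: eq_bigr => i _.
by rewrite /hdN valK; case: (hd y i).
Qed.

Lemma pair_sum (g : nat -> bool) m : \sum_(0 <= k < 2 * m) (g (k./2) (+) odd k : nat) = m.
Proof.
elim: m => [|m IH]; first by rewrite big_geq.
rewrite mulnS add2n big_nat_recr // big_nat_recr // IH.
rewrite -[(2 * m).+1]add1n.
have h1 : (2 * m)./2 = m by rewrite mul2n doubleK.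
have h2 : (true + (2 * m))./2 = m by rewrite mul2n half_bit_double.
rewrite h1 h2 /= oddD oddM /=.
by case: (g m); rewrite /= ?addn0 ?addn1.
Qed.
Hypothesis hle : 2 * a + d <= n.
Hypothesis hdr : d = r * 2 ^ j.
Hypothesis hcc : cc <= 2 ^ j.
Hypothesis heq : r * cc + n = 2 * (a + d).

Lemma count_main (y : V) : #|[set i | hd y i]| = a \/ #|[set i | hd y i]| = a + d.
Proof.
have h2a : 2 * a <= 2 * a + d := leq_addr _ _.
rewrite count_hd (big_cat_nat (leq0n (2 * a)) (leq_trans h2a hle)) /=.
rewrite (big_cat_nat h2a hle) /=.
have -> : \sum_(0 <= k < 2 * a) hdN y k = a.
  rewrite -[RHS](pair_sum (fun p => bit y p.*2 == bit y p.*2.+1)).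
  apply: eq_big_nat => k /andP [_ hk].
  by rewrite (hdN_lt _ (leq_trans hk (leq_trans h2a hle))) /hd /= hk.
have -> : \sum_(2 * a + d <= k < n) hdN y k = (n - (2 * a + d)) * Par y.
  rewrite -sum_nat_const_nat; apply: eq_big_nat => k /andP [hk1 hk2].
  by rewrite (hdN_lt _ hk2) /hd /= ltnNge (leq_trans h2a hk1) /= ltnNge hk1.
case hP: (Par y).
  right.
  have -> : \sum_(2 * a <= k < 2 * a + d) hdN y k = r * cc.
    transitivity (\sum_(2 * a <= k < 2 * a + d) (Nat.lxor (X y) ((k - 2 * a) %% 2 ^ j) < cc) : nat).
      apply: eq_big_nat => k /andP [hk1 hk2].
      rewrite (hdN_lt _ (leq_trans hk2 hle)) /hd /= ltnNge hk1 /= hk2 hP /Src Par_flip /= hk1 hP /=.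
      by rewrite X_flip /main /= hk1 hk2.
    have := big_addn 0 (2 * a + d) (2 * a) xpredT (fun k => (Nat.lxor (X y) ((k - 2 * a) %% 2 ^ j) < cc) : nat).
    move/(_ 0 addn); rewrite add0n addKn => ->.
    under eq_bigr do rewrite addnK.
    rewrite hdr (block_sum (fun k => (Nat.lxor (X y) k < cc) : nat)) ?expn_gt0 // xor_count //; exact: X_lt.
  rewrite muln1; have hs := subnK hle; move: heq hs.
  set N := n - _; set rc := r * cc; rewrite -!plusE -!multE; lia.
have -> : \sum_(2 * a <= k < 2 * a + d) hdN y k = d * ~~ Src y.
  rewrite -{2}(addKn (2 * a) d) -sum_nat_const_nat.
  apply: eq_big_nat => k /andP [hk1 hk2].
  by rewrite (hdN_lt _ (leq_trans hk2 hle)) /hd /= ltnNge hk1 /= hk2 hP.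
by case: (Src y); rewrite /= ?muln0 ?muln1 ?addn0; [left|right].
Qed.
End Cons.


Ltac tolia := rewrite -?plusE -?minusE -?multE; intros;
  repeat match goal with
  | H : is_true (_ <= _) |- _ => apply (elimT leP) in H
  | H : is_true (_ < _) |- _ => apply (elimT ltP) in H
  end;
  try (apply/leP); try (apply/ltP).

Lemma construct n a b s : a <= b -> a + b <= n -> 0 < n ->
  (b - a) * s + n * 2 ^ n.-1 = 2 * b * 2 ^ n.-1 ->
  exists hd : cube_vertex n -> 'I_n -> bool,
    (forall y i, hd (flip y i) i = ~~ hd y i) /\
    (forall y, #|[set i | hd y i]| = a \/ #|[set i | hd y i]| = b).
Proof.
move=> hab habn hn hs.
have hK : 0 < 2 ^ n.-1 by rewrite expn_gt0.
move: hs; set K := 2 ^ n.-1 => hs.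
have h2b : n <= 2 * b by move: hK hs; tolia; nia.
have hds : (b - a) * s = (2 * b - n) * K by move: hab hK hs; tolia; nia.
have hle : 2 * a + (b - a) <= n by move: hab habn; tolia; lia.
suff [j [r [cc [hdr [hcc heq]]]]] : exists j r cc, b - a = r * 2 ^ j /\ cc <= 2 ^ j /\
      r * cc + n = 2 * (a + (b - a)).
  exists (@hd n a (b - a) j cc); split; first exact: hdK.
  move=> y; have := count_main hle hdr hcc heq y.
  by rewrite subnKC.
rewrite subnKC //.
case hd0 : (b - a) => [|d].
  exists 0, 0, 0; split => //; split => //.
  move: hds hK h2b; rewrite hd0; tolia; nia.
set D := d.+1 in hd0 *.
have hD : 0 < D by [].
set j := logn 2 D.
have hB : 2 ^ j %| D by exact: pfactor_dvdnn.
set r := D %/ 2 ^ j.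
have hrD : r * 2 ^ j = D by rewrite divnK.
have hr0 : 0 < r.
  by rewrite lt0n; apply/negP => /eqP hr; move: hrD; rewrite hr mul0n.
have hodd : ~~ (2 %| r).
  apply/negP => /dvdnP [q hq].
  have : 2 ^ j.+1 %| D by rewrite -hrD hq expnS -mulnA; apply: dvdn_mull.
  by rewrite pfactor_dvdn // ltnn.
have hcop : coprime r K.
  by apply: coprimeXr; rewrite coprime_sym prime_coprime.
have hrd : r %| (2 * b - n).
  rewrite -(Gauss_dvdl _ hcop) -hds hd0 -hrD -mulnA; exact: dvdn_mulr.
exists j, r, ((2 * b - n) %/ r); split; first by rewrite hrD.
have hrc : (2 * b - n) %/ r * r = 2 * b - n by rewrite divnK.
split.
  move: hrc hrD hd0 habn hab hr0; set c := (2 * b - n) %/ r; set B := 2 ^ j.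
  tolia; nia.
by move: hrc h2b; set c := (2 * b - n) %/ r; tolia; nia.
Qed.


Lemma back_le n a b s t : a <= b -> a <= n -> b <= n -> 0 < n ->
  s + t = 2 ^ n -> a * s + b * t = n * 2 ^ n.-1 ->
  exists o : cube_vertex n -> cube_vertex n -> bool,
      is_orientation o /\ forall v : cube_vertex n, indeg o v = a \/ indeg o v = b.
Proof.
move=> hab ha hb hn hst heq.
have hK : 2 ^ n = 2 * 2 ^ n.-1 by rewrite -expnS prednK.
move: hst heq; rewrite hK; set K := 2 ^ n.-1 => hst heq.
case: (leqP (a + b) n) => habn.
  have [hd [hdK hc]] : exists hd : cube_vertex n -> 'I_n -> bool,
    (forall y i, hd (flip y i) i = ~~ hd y i) /\
    (forall y, #|[set i | hd y i]| = a \/ #|[set i | hd y i]| = b).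
    apply: (construct (s := s)) => //; move: hab hst heq; tolia; nia.
  exists (orient hd); split; first exact: orient_ok.
  by move=> v; rewrite indeg_orient.
have [hd [hdK hc]] : exists hd : cube_vertex n -> 'I_n -> bool,
    (forall y i, hd (flip y i) i = ~~ hd y i) /\
    (forall y, #|[set i | hd y i]| = n - b \/ #|[set i | hd y i]| = n - a).
  apply: (construct (s := t)) => //; move: hab ha hb habn hst heq; tolia; nia.
pose hd' y i := ~~ hd y i.
have hdK' : forall y i, hd' (flip y i) i = ~~ hd' y i by move=> y i; rewrite /hd' hdK.
exists (orient hd'); split; first exact: orient_ok.
move=> v; rewrite indeg_orient.
have e : #|[set i | hd' v i]| = n - #|[set i | hd v i]|.
  have e2 : #|[set i | hd' v i]| = #|~: [set i | hd v i]| by apply: eq_card => i; rewrite !inE.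
  have := cardsC [set i | hd v i]; rewrite card_ord e2.
  set m := #|[set i | hd v i]|; set m' := #|~: _|; tolia; lia.
rewrite e; case: (hc v) => ->; [right|left]; exact: subKn.
Qed.

Theorem theorem1 (n a b : nat) (hn : 0 < n) (ha : a <= n) (hb : b <= n) :
  (exists o : cube_vertex n -> cube_vertex n -> bool,
      is_orientation o /\ forall v : cube_vertex n, indeg o v = a \/ indeg o v = b)
  <->
  (exists s t : nat, s + t = 2 ^ n /\ a * s + b * t = n * 2 ^ n.-1).
Proof.
split; first by case=> o [ho hv]; exact: (forward hn ho hv).
case=> s [t [hst heq]].
case: (leqP a b) => hab; first exact: (back_le hab ha hb hn hst heq).
have hst' : t + s = 2 ^ n by rewrite addnC.
have heq' : b * t + a * s = n * 2 ^ n.-1 by rewrite addnC.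
have [o [ho hv]] := back_le (ltnW hab) hb ha hn hst' heq'.
by exists o; split => // v; case: (hv v); [right|left].
Qed.
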